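(* For all $k,m\in\mathbb{N}$ with $k<m$, the metric space $([\mathbb{N}]^k,d^{(k)}_{\mathrm{I}})$ embeds isometrically into $([\mathbb{N}]^m,d^{(m)}_{\mathrm{I}})$.
   Context: For $k\in\mathbb{N}$, $[\mathbb{N}]^k$ is the set of subsets of $\mathbb{N}$ of cardinality $k$, written $\{a_1<\dots<a_k\}$. Kalton's interlacing graph on $[\mathbb{N}]^k$: $A=\{a_1<\dots<a_k\}\ne B=\{b_1<\dots<b_k\}$ are adjacent iff either $a_i\le b_i\le a_{i+1}$ for $1\le i<k$ and $a_k\le b_k$, or $b_i\le a_i\le b_{i+1}$ for $1\le i<k$ and $b_k\le a_k$. $d^{(k)}_{\mathrm{I}}$ is its shortest-path metric. *)

(* Defs.v *)
From mathcomp Require Import all_boot.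
Set Implicit Arguments. Unset Strict Implicit. Unset Printing Implicit Defensive.

(* [N]^k : k-element subsets of N, represented by their increasing
   enumeration a_1 < ... < a_k (0-indexed here: a_0 < ... < a_{k-1}). *)
Definition kset (k : nat) := {s : seq nat | sorted ltn s && (size s == k)}.

(* b interlaces a from above: a_i <= b_i <= a_{i+1} for i < k, and a_k <= b_k
   (1-indexed in the paper; here 0-indexed with i ranging over 0..k-2). *)
Definition interlaced (a b : seq nat) : bool :=
  all (fun i => (nth 0 a i <= nth 0 b i) && (nth 0 b i <= nth 0 a i.+1))
      (iota 0 (size a).-1)
  && (nth 0 a (size a).-1 <= nth 0 b (size a).-1).

Definition kalton_adj (k : nat) : rel (kset k) :=
  fun A B => (A != B) && (interlaced (val A) (val B) || interlaced (val B) (val A)).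

Definition walk_len (k : nat) (A B : kset k) (n : nat) : Prop :=
  exists p : seq (kset k),
    [/\ path (@kalton_adj k) A p, last A p = B & size p = n].

Definition dI (k : nat) (A B : kset k) (n : nat) : Prop :=
  walk_len A B n /\ forall n', walk_len A B n' -> n <= n'.

(* Main.v *)
Require Import Defs.
From mathcomp Require Import all_boot zify.
Set Implicit Arguments. Unset Strict Implicit.

Definition fseq d (a : seq nat) := iota 0 d ++ map (addn d) a.
Definition gseq d (b : seq nat) := map (subn^~ d) (drop d b).

Lemma size_fseq d a : size (fseq d a) = d + size a.
Proof. by rewrite /fseq size_cat size_iota size_map. Qed.

Lemma nth_fseq d a i : i < d + size a ->
  nth 0 (fseq d a) i = if i < d then i else nth 0 a (i - d) + d.
Proof.
move=> Hi; rewrite /fseq nth_cat size_iota; case: ifP => Hid.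
  by rewrite nth_iota.
rewrite (nth_map 0) 1?addnC //; lia.
Qed.

Lemma interl_f d a b : size a = size b -> 0 < d -> interlaced a b ->
  interlaced (fseq d a) (fseq d b).
Proof.
move=> Hs Hd /andP[/allP H1 H2].
rewrite /interlaced size_fseq; apply/andP; split.
  apply/allP=> i; rewrite mem_iota add0n => /andP[_ Hi].
  rewrite !nth_fseq -?Hs; try lia.
  case: (ltnP i d) => Hid; case: (ltnP i.+1 d) => Hid1.
  - by rewrite leqnn leqnSn.
  - have -> : i.+1 - d = 0 by lia. rewrite leqnn /=; lia.
  - lia.
  - have := H1 (i - d); rewrite mem_iota add0n.
    have -> : i.+1 - d = (i - d).+1 by lia.
    case/(_ _)/andP; first lia. move=> X Y; rewrite leq_add2r X /= leq_add2r Y //.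
rewrite !nth_fseq -?Hs; try lia.
move: H2; case: (size a) => [|k] H2.
  by rewrite addn0 !ifT // ltn_predL.
rewrite !ifF; try lia.
have -> : (d + k.+1).-1 - d = k by lia. by rewrite leq_add2r.
Qed.

Lemma nth_ge (b : seq nat) i : sorted ltn b -> i < size b -> i <= nth 0 b i.
Proof.
move=> Hb; elim: i => [|i IH] Hi //.
have := sorted_ltn_nth ltn_trans 0 Hb; move=> /(_ i i.+1) H.
have := IH (ltnW Hi). have : nth 0 b i < nth 0 b i.+1 by apply: H => //; rewrite inE //; lia.
lia.
Qed.

Lemma gseq_sorted d b : sorted ltn b -> sorted ltn (gseq d b).
Proof.
move=> Hb; rewrite /gseq sorted_map.
apply: (@sub_in_sorted _ (fun x => d <= x)); last exact: drop_sorted Hb.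
  move=> x y Hx Hy /= Hxy; rewrite /= in Hx Hy; lia.
apply/allP=> x /(nthP 0) [i Hi <-]; rewrite nth_drop.
rewrite size_drop in Hi. apply: leq_trans (leq_addr i d) (@nth_ge b (d + i) Hb _). by rewrite -ltn_subRL.
Qed.

Lemma size_gseq d b : size (gseq d b) = size b - d.
Proof. by rewrite /gseq size_map size_drop. Qed.

Lemma nth_gseq d b j : nth 0 (gseq d b) j = nth 0 b (d + j) - d.
Proof.
rewrite /gseq; case: (ltnP j (size b - d)) => H.
  by rewrite (nth_map 0) ?size_drop // nth_drop.
rewrite nth_default ?size_map ?size_drop // nth_default //; lia.
Qed.

Lemma interl_g d b c : size b = size c -> d <= size b -> interlaced b c ->
  interlaced (gseq d b) (gseq d c).
Proof.
move=> Hs Hd /andP[/allP H1 H2].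
rewrite /interlaced size_gseq; apply/andP; split.
  apply/allP=> j; rewrite mem_iota add0n => /andP[_ Hj].
  rewrite !nth_gseq. have := H1 (d + j); rewrite mem_iota add0n.
  case/(_ _)/andP; first lia. rewrite addnS => X Y.
  by rewrite leq_sub2r //= leq_sub2r.
rewrite !nth_gseq.
case E: (size b - d) => [|k].
  have Hbd: size b <= d by rewrite -subn_eq0 E.
  by rewrite addn0 !nth_default // -Hs.
have -> : d + k.+1.-1 = (size b).-1 by lia. by rewrite leq_sub2r.
Qed.

Lemma gf d a : gseq d (fseq d a) = a.
Proof.
rewrite /gseq /fseq drop_cat size_iota ltnn subnn drop0 -map_comp.
by rewrite -[RHS]map_id; apply: eq_map => x /=; rewrite addKn.
Qed.

Lemma fseq_sorted d a : sorted ltn a -> sorted ltn (fseq d a).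
Proof.
move=> Ha; rewrite /fseq (sorted_pairwise ltn_trans) pairwise_cat.
rewrite (sorted_pairwise ltn_trans) in Ha.
apply/and3P; split.
- apply/allrelP => x y; rewrite mem_iota => Hx /mapP [z _ ->]; lia.
- by have := iota_ltn_sorted 0 d; rewrite (sorted_pairwise ltn_trans).
- by rewrite pairwise_map; apply: sub_pairwise Ha => x y /=; lia.
Qed.

Lemma fP k m (A : kset k) : k <= m -> sorted ltn (fseq (m - k) (val A)) && (size (fseq (m - k) (val A)) == m).
Proof.
case: A => a /= /andP[Ha /eqP Hs] Hkm.
by rewrite fseq_sorted //= size_fseq Hs subnK.
Qed.

Lemma gP k m (B : kset m) : k <= m -> sorted ltn (gseq (m - k) (val B)) && (size (gseq (m - k) (val B)) == k).
Proof.
case: B => b /= /andP[Hb /eqP Hs] Hkm.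
by rewrite gseq_sorted //= size_gseq Hs subKn.
Qed.

Definition fmap k m (H : k <= m) (A : kset k) : kset m := @exist _ (fun s => sorted ltn s && (size s == m)) _ (@fP k m A H).
Definition gmap k m (H : k <= m) (B : kset m) : kset k := @exist _ (fun s => sorted ltn s && (size s == k)) _ (@gP k m B H).
Arguments fmap {k m}.
Arguments gmap {k m}.

Lemma gfmap k m (H : k <= m) A : gmap H (fmap H A) = A.
Proof. by apply: val_inj; rewrite /= gf. Qed.

Lemma fadj k m (H : k < m) (A B : kset k) :
  kalton_adj A B -> kalton_adj (fmap (ltnW H) A) (fmap (ltnW H) B).
Proof.
case/andP=> Hne Hi; apply/andP; split.
  apply: contra Hne => /eqP E. by rewrite -(gfmap (ltnW H) A) E gfmap.
have Hs : size (val A) = size (val B).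
  by case: A {Hne Hi} => a /= /andP[_ /eqP ->]; case: B => b /= /andP[_ /eqP ->].
have Hd : 0 < m - k by rewrite subn_gt0.
by case/orP: Hi => Hi; apply/orP; [left|right]; apply: interl_f.
Qed.

Lemma gadj k m (H : k <= m) (B C : kset m) :
  kalton_adj B C -> gmap H B = gmap H C \/ kalton_adj (gmap H B) (gmap H C).
Proof.
case/andP=> _ Hi.
case: (eqVneq (gmap H B) (gmap H C)) => E; [by left | right].
apply/andP; split => //.
have Hs : size (val B) = size (val C).
  by case: B {E Hi} => a /= /andP[_ /eqP ->]; case: C => b /= /andP[_ /eqP ->].
have Hd : m - k <= size (val B).
  by case: B {E Hi Hs} => a /= /andP[_ /eqP ->]; apply: leq_subr.
by case/orP: Hi => Hi; apply/orP; [left|right]; apply: interl_g; rewrite -?Hs.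
Qed.

Lemma walk_f k m (H : k < m) (A B : kset k) n :
  walk_len A B n -> walk_len (fmap (ltnW H) A) (fmap (ltnW H) B) n.
Proof.
case=> p [Hp Hl Hs]; exists (map (fmap (ltnW H)) p); split.
- elim: p A Hp {Hl Hs} => //= x p IH A /andP[Ha Hp].
  by rewrite fadj //= IH.
- by rewrite last_map Hl.
- by rewrite size_map.
Qed.

Lemma walk_g k m (H : k <= m) (A : kset m) p :
  path (@kalton_adj m) A p ->
  exists q, [/\ path (@kalton_adj k) (gmap H A) q,
     last (gmap H A) q = gmap H (last A p) & size q <= size p].
Proof.
elim: p A => [|x p IH] A /=; first by exists [::].
case/andP=> Ha Hp; have [q [Hq Hl Hs]] := IH x Hp.
case: (gadj H Ha) => E.
  by exists q; split => //; [rewrite E | rewrite E | apply: leqW].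
by exists (gmap H x :: q); split => //=; rewrite E Hq.
Qed.

Theorem corollary5p2 (k m : nat) : k < m ->
  exists f : kset k -> kset m,
    forall (A B : kset k) (n : nat), dI A B n <-> dI (f A) (f B) n.
Proof.
move=> H; exists (fmap (ltnW H)) => A B n.
have back : forall n', walk_len (fmap (ltnW H) A) (fmap (ltnW H) B) n' ->
    exists2 n'', n'' <= n' & walk_len A B n''.
  move=> n' [p [Hp Hl Hs]].
  have [q [Hq Hql Hqs]] := walk_g (ltnW H) Hp.
  exists (size q); first by rewrite -Hs.
  exists q; split; first by move: Hq; rewrite gfmap.
    by move: Hql; rewrite Hl !gfmap.
  done.
split.
- case=> Hw Hmin; split; first exact: walk_f.
  move=> n' /back [n'' Hle Hw'']; exact: leq_trans (Hmin _ Hw'') Hle.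
- case=> Hw Hmin; have [n'' Hle Hw''] := back _ Hw.
  have Hge := Hmin _ (walk_f H Hw'').
  have E : n'' = n by apply/eqP; rewrite eqn_leq Hle Hge.
  split; first by rewrite -E.
  by move=> n' Hn'; apply: Hmin; apply: walk_f.
Qed.
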